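(* Let $N$ be a positive integer, $h:=1/N$, $t_j:=jh$ for $j\in\mathbb Z$, and $e_n(t):=\exp(2\pi i n t)$. Let $\mathbb T_h:=\mathrm{span}\{e_n : n\in\mathbb Z,\ -N/2\le n<N/2\}$. Then for every $\phi\in\mathbb T_h$ and every $t\in\mathbb R$ with $t/h\notin\mathbb Z$, \[ h\sum_{j=1}^N \cot(\pi(t-t_j))\,\phi(t_j)=(H\phi)(t)+\cot(\pi t/h)\,\phi(t), \] where $(H\phi)(t):=\mathrm{p.v.}\int_0^1\cot(\pi(t-\tau))\,\phi(\tau)\,\mathrm d\tau$ is the periodic Hilbert transform.
   Context: Trigonometric polynomials are complex-valued 1-periodic functions; p.v. denotes the Cauchy principal value integral. *)

(* Defs.v *)
From Stdlib Require Export Reals ZArith.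
From Coquelicot Require Export Coquelicot.
Open Scope R_scope.

Definition cot (x : R) : R := cos x / sin x.

Definition e_n (n : Z) (t : R) : C :=
  (cos (2 * PI * IZR n * t), sin (2 * PI * IZR n * t)).

Fixpoint csum (n : nat) (f : nat -> C) : C :=
  match n with
  | O => RtoC 0
  | S m => Cplus (csum m f) (f m)
  end.

(* The frequencies n in Z with -N/2 <= n < N/2 are exactly
   n = k - floor(N/2) for k = 0, ..., N-1. *)
Definition freq (N k : nat) : Z := (Z.of_nat k - Z.of_nat N / 2)%Z.

Definition in_Th (N : nat) (phi : R -> C) : Prop :=
  exists c : Z -> C,
    forall t : R, phi t = csum N (fun k => Cmult (c (freq N k)) (e_n (freq N k) t)).

Definition RIntC (f : R -> C) (a b : R) : C :=
  @RInt C_R_CompleteNormedModule f a b.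

Definition is_pv_integral (f : R -> C) (a b c : R) (l : C) : Prop :=
  filterlim (fun eps => Cplus (RIntC f a (c - eps)) (RIntC f (c + eps) b))
    (at_right 0) (@locally C_R_CompleteNormedModule l).

(* (H phi)(t) = p.v. int_0^1 cot(pi (t - tau)) phi(tau) dtau = l, for t not an
   integer; the only singularity in [0,1] is at tau = frac_part t. *)
Definition is_periodic_Hilbert (phi : R -> C) (t : R) (l : C) : Prop :=
  is_pv_integral (fun tau => Cmult (RtoC (cot (PI * (t - tau)))) (phi tau))
    0 1 (frac_part t) l.

(* Main.v *)
Require Import Defs.
From Stdlib Require Import Lra Lia FunctionalExtensionality.
Open Scope R_scope.


Lemma Ceq (a b c d : R) : a = c -> b = d -> (a, b) = (c, d) :> C.
Proof. intros; subst; reflexivity. Qed.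

Lemma cos_2piZ (k : Z) : cos (2 * PI * IZR k) = 1.
Proof.
  replace (2 * PI * IZR k) with (2 * (IZR k * PI)) by ring.
  rewrite cos_2a_sin, sin_eq_0_1 by (exists k; ring). ring.
Qed.

Lemma sin_2piZ (k : Z) : sin (2 * PI * IZR k) = 0.
Proof. apply sin_eq_0_1. exists (2 * k)%Z. rewrite mult_IZR. simpl. ring. Qed.

Lemma e_arg_add (m : Z) (x y : R) : e_n m (x + y) = Cmult (e_n m x) (e_n m y).
Proof.
  unfold e_n, Cmult; simpl.
  replace (2 * PI * IZR m * (x + y)) with (2 * PI * IZR m * x + 2 * PI * IZR m * y) by ring.
  rewrite cos_plus, sin_plus. apply Ceq; ring.
Qed.

Lemma e_freq_add (a b : Z) (x : R) : e_n (a + b) x = Cmult (e_n a x) (e_n b x).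
Proof.
  unfold e_n, Cmult; simpl. rewrite plus_IZR.
  replace (2 * PI * (IZR a + IZR b) * x) with (2 * PI * IZR a * x + 2 * PI * IZR b * x) by ring.
  rewrite cos_plus, sin_plus. apply Ceq; ring.
Qed.

Lemma e_neg_arg (m : Z) (x : R) : e_n m (- x) = e_n (- m) x.
Proof. unfold e_n. rewrite opp_IZR. f_equal; f_equal; ring. Qed.

Lemma e_freq0 (x : R) : e_n 0 x = RtoC 1.
Proof. unfold e_n, RtoC. simpl. replace (2 * PI * 0 * x) with 0 by ring.
  rewrite cos_0, sin_0. reflexivity. Qed.

Lemma e_intarg (m k : Z) : e_n m (IZR k) = RtoC 1.
Proof. unfold e_n, RtoC. replace (2 * PI * IZR m * IZR k) with (2 * PI * IZR (m * k)) by (rewrite mult_IZR; ring).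
  rewrite cos_2piZ, sin_2piZ. reflexivity. Qed.

Lemma e_inv (m : Z) (x : R) : Cmult (e_n m x) (e_n (- m) x) = RtoC 1.
Proof. rewrite <- e_freq_add. replace (m + - m)%Z with 0%Z by lia. apply e_freq0. Qed.

Lemma e_inv' (m : Z) (x : R) : Cmult (e_n (- m) x) (e_n m x) = RtoC 1.
Proof. rewrite Cmult_comm. apply e_inv. Qed.

Lemma cot_base (u : R) : sin (PI * u) <> 0 ->
  Cmult (RtoC (cot (PI * u))) (Cminus (RtoC 1) (e_n (-1) u)) =
  Cmult Ci (Cplus (RtoC 1) (e_n (-1) u)).
Proof.
  intros H. unfold e_n, cot, Cmult, Cminus, Cplus, Copp, RtoC, Ci; simpl.
  replace (2 * PI * -1 * u) with (- (2 * (PI * u))) by ring.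
  rewrite cos_neg, sin_neg, cos_2a, sin_2a.
  pose proof (sin2_cos2 (PI * u)) as Hs. unfold Rsqr in Hs.
  set (c := cos (PI * u)) in *. set (s := sin (PI * u)) in *.
  apply Ceq; field_simplify_eq; auto.
  - assert (c * c = 1 - s * s) by lra.
    replace (c ^ 3) with (c * (c * c)) by ring. rewrite H0. ring.
  - assert (c * c = 1 - s * s) by lra.
    replace (c ^ 2) with (c * c) by ring. rewrite H0. ring.
Qed.

Lemma cot_step (n : Z) (t s : R) : sin (PI * (t - s)) <> 0 ->
  Cmult (RtoC (cot (PI * (t - s)))) (e_n (n + 1) s) =
  Cminus (Cmult (e_n 1 t) (Cmult (RtoC (cot (PI * (t - s)))) (e_n n s)))
         (Cmult Ci (Cplus (Cmult (e_n 1 t) (e_n n s)) (e_n (n + 1) s))).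
Proof.
  intros H. pose proof (cot_base (t - s) H) as Hb.
  assert (Hw : e_n (n + 1) s = Cmult (Cmult (e_n 1 t) (e_n n s)) (e_n (-1) (t - s))).
  { unfold Rminus. rewrite e_arg_add, e_neg_arg.
    replace (n + 1)%Z with (n + - -1)%Z at 1 by lia.
    rewrite e_freq_add.
    pose proof (e_inv 1 t) as Hi. change (Z.opp 1) with (Zneg 1) in Hi.
    transitivity (Cmult (Cmult (e_n 1 t) (e_n (-1) t)) (Cmult (e_n n s) (e_n (- -1) s))).
    { rewrite Hi. ring. }
    ring. }
  rewrite Hw.
  set (A := Cmult (e_n 1 t) (e_n n s)) in *.
  set (w := e_n (-1) (t - s)) in *.
  set (k := RtoC (cot (PI * (t - s)))) in *.
  transitivity (Cminus (Cminus (Cmult A k) (Cmult Ci (Cplus A (Cmult A w)))) (Cmult A (Cminus (Cmult k (Cminus (RtoC 1) w)) (Cmult Ci (Cplus (RtoC 1) w))))).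
  2:{ rewrite Hb. unfold A. ring. }
  unfold A. ring.
Qed.


Lemma csum_ext (n : nat) (f g : nat -> C) : (forall k, (k < n)%nat -> f k = g k) -> csum n f = csum n g.
Proof. induction n; intros H; simpl; auto. rewrite IHn by (intros; apply H; lia). rewrite H by lia. auto. Qed.

Lemma csum_plus (n : nat) (f g : nat -> C) : csum n (fun k => Cplus (f k) (g k)) = Cplus (csum n f) (csum n g).
Proof. induction n; simpl. apply Ceq; simpl; ring. rewrite IHn. ring. Qed.

Lemma csum_scal (n : nat) (a : C) (f : nat -> C) : csum n (fun k => Cmult a (f k)) = Cmult a (csum n f).
Proof. induction n; simpl. apply Ceq; simpl; ring. rewrite IHn. ring. Qed.

Lemma csum_opp (n : nat) (f : nat -> C) : csum n (fun k => Copp (f k)) = Copp (csum n f).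
Proof. induction n; simpl. apply Ceq; simpl; ring. rewrite IHn. ring. Qed.

Lemma csum_minus (n : nat) (f g : nat -> C) : csum n (fun k => Cminus (f k) (g k)) = Cminus (csum n f) (csum n g).
Proof. unfold Cminus. rewrite csum_plus, csum_opp. reflexivity. Qed.

Lemma csum_zero (n : nat) : csum n (fun _ => RtoC 0) = RtoC 0.
Proof. induction n; simpl; auto. rewrite IHn. apply Ceq; simpl; ring. Qed.

Lemma csum_swap (n m : nat) (f : nat -> nat -> C) :
  csum n (fun j => csum m (fun k => f j k)) = csum m (fun k => csum n (fun j => f j k)).
Proof.
  induction n; simpl. symmetry. apply csum_zero.
  rewrite IHn. rewrite <- csum_plus. reflexivity.
Qed.

Lemma csum_one (n : nat) : csum n (fun _ => RtoC 1) = RtoC (INR n).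
Proof. induction n; simpl csum; auto. rewrite IHn. rewrite S_INR. apply Ceq; simpl; ring. Qed.

Lemma Cmult_reg (a b : C) : a <> RtoC 0 -> Cmult a b = RtoC 0 -> b = RtoC 0.
Proof.
  intros Ha Hab. replace b with (Cmult (Cinv a) (Cmult a b)).
  rewrite Hab. ring. field. auto.
Qed.

Lemma geom (m : Z) (x : R) (n : nat) :
  Cmult (Cminus (e_n m x) (RtoC 1)) (csum n (fun k => e_n m (INR (S k) * x))) =
  Cminus (e_n m (INR (S n) * x)) (e_n m x).
Proof.
  induction n; cbn [csum].
  - simpl INR. replace (1 * x) with x by ring. apply Ceq; simpl; ring.
  - transitivity (Cplus (Cmult (Cminus (e_n m x) (RtoC 1)) (csum n (fun k => e_n m (INR (S k) * x)))) (Cmult (Cminus (e_n m x) (RtoC 1)) (e_n m (INR (S n) * x)))).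
    ring. rewrite IHn.
    replace (INR (S (S n)) * x) with (INR (S n) * x + x) by (rewrite (S_INR (S n)); ring).
    rewrite e_arg_add. ring.
Qed.

Lemma sin_nonint (x : R) : (forall z : Z, x <> IZR z) -> sin (PI * x) <> 0.
Proof.
  intros H Hs. apply sin_eq_0_0 in Hs. destruct Hs as [k Hk].
  apply (H k). pose proof PI_RGT_0. apply (Rmult_eq_reg_l PI); [|lra]. lra.
Qed.


Definition Qs (N : nat) (m : Z) : C := csum N (fun k => e_n m (INR (S k) * (1 / INR N))).

Lemma INR_pos (N : nat) : (0 < N)%nat -> 0 < INR N.
Proof. intros; apply lt_0_INR; lia. Qed.

Lemma e_ne1 (N : nat) (m : Z) : (0 < N)%nat -> (0 < Z.abs m < Z.of_nat N)%Z ->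
  e_n m (1 / INR N) <> RtoC 1.
Proof.
  intros HN Hm He. pose proof (INR_pos N HN) as HNp. pose proof PI_RGT_0.
  assert (Hc : cos (2 * PI * IZR m * (1 / INR N)) = 1) by (apply (f_equal fst) in He; exact He).
  assert (Hs : sin (2 * PI * IZR m * (1 / INR N)) = 0) by (apply (f_equal snd) in He; exact He).
  apply sin_eq_0_0 in Hs. destruct Hs as [k Hk].
  assert (H2 : (2 * m = k * Z.of_nat N)%Z).
  { apply eq_IZR. rewrite !mult_IZR, <- INR_IZR_INZ. simpl (IZR 2).
    apply (Rmult_eq_reg_r (PI / INR N)). 2:{ apply Rgt_not_eq. apply Rdiv_lt_0_compat; lra. }
    replace (2 * IZR m * (PI / INR N)) with (2 * PI * IZR m * (1 / INR N)) by (field; lra).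
    rewrite Hk. field. lra. }
  assert (k = 1 \/ k = -1)%Z as [-> | ->] by nia.
  - rewrite Hk in Hc. simpl IZR in Hc. rewrite Rmult_1_l, cos_PI in Hc. lra.
  - rewrite Hk in Hc. simpl IZR in Hc. replace (-1 * PI) with (- PI) in Hc by ring.
    rewrite cos_neg, cos_PI in Hc. lra.
Qed.

Lemma Q_zero (N : nat) (m : Z) : (0 < N)%nat -> (0 < Z.abs m < Z.of_nat N)%Z -> Qs N m = RtoC 0.
Proof.
  intros HN Hm. pose proof (INR_pos N HN) as HNp.
  apply (Cmult_reg (Cminus (e_n m (1 / INR N)) (RtoC 1))).
  - intros H. apply (e_ne1 N m HN Hm). rewrite <- (Cplus_0_l (RtoC 1)). rewrite <- H. ring.
  - unfold Qs. rewrite geom.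
    replace (INR (S N) * (1 / INR N)) with (IZR 1 + 1 / INR N) by (rewrite S_INR; simpl; field; lra).
    rewrite e_arg_add, e_intarg. ring.
Qed.

Lemma Q_0 (N : nat) : Qs N 0 = RtoC (INR N).
Proof. unfold Qs. rewrite <- csum_one. apply csum_ext. intros. apply e_freq0. Qed.

Lemma Q_N (N : nat) : (0 < N)%nat -> Qs N (Z.of_nat N) = RtoC (INR N).
Proof.
  intros HN. pose proof (INR_pos N HN). unfold Qs. rewrite <- csum_one. apply csum_ext. intros k _.
  unfold e_n. replace (2 * PI * IZR (Z.of_nat N) * (INR (S k) * (1 / INR N))) with (2 * PI * IZR (Z.of_nat (S k))).
  rewrite cos_2piZ, sin_2piZ. reflexivity.
  rewrite <- !INR_IZR_INZ. field. lra.
Qed.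


Definition Sd (N : nat) (t : R) (n : Z) : C :=
  csum N (fun k => Cmult (RtoC (cot (PI * (t - INR (S k) * (1 / INR N))))) (e_n n (INR (S k) * (1 / INR N)))).

Lemma sin_node (N : nat) (t : R) : (0 < N)%nat -> (forall z : Z, t / (1 / INR N) <> IZR z) ->
  forall j : nat, sin (PI * (t - INR j * (1 / INR N))) <> 0.
Proof.
  intros HN Ht j. pose proof (INR_pos N HN). apply sin_nonint. intros z Hz.
  apply (Ht (z * Z.of_nat N + Z.of_nat j)%Z). rewrite plus_IZR, mult_IZR, <- !INR_IZR_INZ.
  rewrite <- Hz. field. lra.
Qed.

Lemma sin_tN (N : nat) (t : R) : (0 < N)%nat -> (forall z : Z, t / (1 / INR N) <> IZR z) ->
  sin (PI * (INR N * t)) <> 0.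
Proof.
  intros HN Ht. pose proof (INR_pos N HN). apply sin_nonint. intros z Hz.
  apply (Ht z). rewrite <- Hz. field. lra.
Qed.

Lemma Sd_rec (N : nat) (t : R) (n : Z) : (0 < N)%nat -> (forall z : Z, t / (1 / INR N) <> IZR z) ->
  Sd N t (n + 1) = Cminus (Cmult (e_n 1 t) (Sd N t n))
     (Cmult Ci (Cplus (Cmult (e_n 1 t) (Qs N n)) (Qs N (n + 1)))).
Proof.
  intros HN Ht. unfold Sd, Qs.
  rewrite (csum_ext N _ (fun k => Cminus (Cmult (e_n 1 t) (Cmult (RtoC (cot (PI * (t - INR (S k) * (1 / INR N))))) (e_n n (INR (S k) * (1 / INR N)))))
         (Cmult Ci (Cplus (Cmult (e_n 1 t) (e_n n (INR (S k) * (1 / INR N)))) (e_n (n + 1) (INR (S k) * (1 / INR N))))))).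
  2:{ intros k _. apply cot_step. apply sin_node; auto. }
  rewrite csum_minus, csum_scal, csum_scal, csum_plus, csum_scal. reflexivity.
Qed.

Lemma Sd_pos (N : nat) (t : R) : (0 < N)%nat -> (forall z : Z, t / (1 / INR N) <> IZR z) ->
  forall m : nat, (m < N)%nat ->
  Sd N t (Z.of_nat m) = Cmult (e_n (Z.of_nat m) t)
     (Cminus (Sd N t 0) (Cmult (Cmult Ci (RtoC (INR N))) (RtoC (IZR (Z.sgn (Z.of_nat m)))))).
Proof.
  intros HN Ht. induction m; intros Hm.
  - simpl. rewrite e_freq0. ring.
  - rewrite Nat2Z.inj_succ. unfold Z.succ. rewrite Sd_rec by auto.
    rewrite IHm by lia. rewrite (Q_zero N (Z.of_nat m + 1)) by (auto; lia).
    replace (Z.sgn (Z.of_nat m + 1)) with 1%Z by lia.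
    destruct m.
    + simpl Z.of_nat. rewrite Q_0, e_freq0. simpl (0+1)%Z. simpl (IZR (Z.sgn 0)). simpl (IZR 1).
      apply Ceq; simpl; ring.
    + rewrite (Q_zero N (Z.of_nat (S m))) by (auto; lia).
      replace (Z.sgn (Z.of_nat (S m))) with 1%Z by lia.
      rewrite (Z.add_comm _ 1), e_freq_add. ring.
Qed.


Lemma Sd_neg (N : nat) (t : R) : (0 < N)%nat -> (forall z : Z, t / (1 / INR N) <> IZR z) ->
  forall m : nat, (m < N)%nat ->
  Sd N t (- Z.of_nat m) = Cmult (e_n (- Z.of_nat m) t)
     (Cminus (Sd N t 0) (Cmult (Cmult Ci (RtoC (INR N))) (RtoC (IZR (Z.sgn (- Z.of_nat m)))))).
Proof.
  intros HN Ht. induction m; intros Hm.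
  - simpl. rewrite e_freq0. ring.
  - pose proof (Sd_rec N t (- Z.of_nat (S m)) HN Ht) as R.
    replace (- Z.of_nat (S m) + 1)%Z with (- Z.of_nat m)%Z in R by lia.
    rewrite (Q_zero N (- Z.of_nat (S m))) in R by (auto; lia).
    assert (E : Cmult (e_n 1 t) (Sd N t (- Z.of_nat (S m))) =
                Cplus (Sd N t (- Z.of_nat m)) (Cmult Ci (Qs N (- Z.of_nat m)))).
    { rewrite R. ring. }
    transitivity (Cmult (e_n (-1) t) (Cmult (e_n 1 t) (Sd N t (- Z.of_nat (S m))))).
    { rewrite Cmult_assoc. change (-1)%Z with (- (1))%Z. rewrite e_inv'. ring. }
    rewrite E, IHm by lia.
    replace (Z.sgn (- Z.of_nat (S m))) with (-1)%Z by lia.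
    destruct m.
    + simpl Z.of_nat. simpl (- 0)%Z. rewrite Q_0, e_freq0. simpl (IZR (Z.sgn 0)).
      change (- Z.of_nat 1)%Z with (-1)%Z. simpl (IZR (-1)).
      apply Ceq; simpl; ring.
    + rewrite (Q_zero N (- Z.of_nat (S m))) by (auto; lia).
      replace (Z.sgn (- Z.of_nat (S m))) with (-1)%Z by lia.
      replace (- Z.of_nat (S (S m)))%Z with (-1 + - Z.of_nat (S m))%Z by lia.
      rewrite e_freq_add. ring.
Qed.

Lemma Sd_N (N : nat) (t : R) : (0 < N)%nat -> Sd N t (Z.of_nat N) = Sd N t 0.
Proof.
  intros HN. pose proof (INR_pos N HN). unfold Sd. apply csum_ext. intros k _. f_equal.
  rewrite e_freq0.
  unfold e_n. replace (2 * PI * IZR (Z.of_nat N) * (INR (S k) * (1 / INR N))) with (2 * PI * IZR (Z.of_nat (S k))).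
  rewrite cos_2piZ, sin_2piZ. reflexivity.
  rewrite <- !INR_IZR_INZ. field. lra.
Qed.

Lemma cot_tN (y : R) : sin y <> 0 ->
  Cmult (RtoC (cot y)) (Cminus (RtoC 1) (e_n 1 (y / PI))) = Cmult (Copp Ci) (Cplus (RtoC 1) (e_n 1 (y / PI))).
Proof.
  intros H. pose proof PI_RGT_0.
  unfold e_n, cot, Cmult, Cminus, Cplus, Copp, RtoC, Ci; simpl.
  replace (2 * PI * 1 * (y / PI)) with (2 * y) by (field; lra).
  rewrite cos_2a, sin_2a.
  pose proof (sin2_cos2 y) as Hs. unfold Rsqr in Hs.
  set (c := cos y) in *. set (s := sin y) in *.
  apply Ceq; field_simplify_eq; auto.
  - assert (c * c = 1 - s * s) by lra.
    replace (c ^ 3) with (c * (c * c)) by ring. rewrite H1. ring.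
  - assert (c * c = 1 - s * s) by lra.
    replace (c ^ 2) with (c * c) by ring. rewrite H1. ring.
Qed.

Lemma Sd_0 (N : nat) (t : R) : (0 < N)%nat -> (forall z : Z, t / (1 / INR N) <> IZR z) ->
  Sd N t 0 = RtoC (INR N * cot (PI * (INR N * t))).
Proof.
  intros HN Ht. pose proof (INR_pos N HN). pose proof PI_RGT_0.
  set (W := e_n (Z.of_nat N) t).
  assert (HS : Sd N t 0 = Cminus (Cmult W (Cminus (Sd N t 0) (Cmult Ci (RtoC (INR N))))) (Cmult Ci (RtoC (INR N)))).
  { rewrite <- (Sd_N N t HN) at 1. destruct N as [|m]; [lia|].
    rewrite Nat2Z.inj_succ. unfold Z.succ. rewrite Sd_rec by auto.
    rewrite Sd_pos by (auto; lia).
    replace (Z.of_nat m + 1)%Z with (Z.of_nat (S m)) by lia. rewrite Q_N by auto.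
    unfold W. rewrite Nat2Z.inj_succ. unfold Z.succ. rewrite (Z.add_comm _ 1), e_freq_add.
    destruct m.
    - simpl Z.of_nat. rewrite Q_0, e_freq0. simpl (IZR (Z.sgn 0)). ring.
    - rewrite Q_zero by (auto; lia). replace (Z.sgn (Z.of_nat (S m))) with 1%Z by lia. simpl (IZR 1). ring. }
  set (y := PI * (INR N * t)).
  assert (HW : W = e_n 1 (y / PI)).
  { unfold W, e_n, y. rewrite <- INR_IZR_INZ. f_equal; f_equal; simpl; field; lra. }
  pose proof (cot_tN y (sin_tN N t HN Ht)) as Hc. rewrite <- HW in Hc.
  assert (Hnz : Cminus (RtoC 1) W <> RtoC 0).
  { intros Hz. pose proof (sin_tN N t HN Ht) as Hs. fold y in Hs.
    assert (W = RtoC 1) as HW1 by (rewrite <- (Cplus_0_l W), <- Hz; ring).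
    rewrite HW1 in Hc. apply (f_equal snd) in Hc. unfold Cmult, Cminus, Cplus, Copp, RtoC, Ci in Hc; simpl in Hc. lra. }
  assert (Hd : Cmult (Cminus (RtoC 1) W) (Cminus (Sd N t 0) (RtoC (INR N * cot y))) = RtoC 0).
  { transitivity (Cminus (Cminus (Sd N t 0) (Cminus (Cmult W (Cminus (Sd N t 0) (Cmult Ci (RtoC (INR N))))) (Cmult Ci (RtoC (INR N)))))
       (Cmult (RtoC (INR N)) (Cminus (Cmult (RtoC (cot y)) (Cminus (RtoC 1) W)) (Cmult (Copp Ci) (Cplus (RtoC 1) W))))).
    - replace (RtoC (INR N * cot y)) with (Cmult (RtoC (INR N)) (RtoC (cot y))) by (apply Ceq; simpl; ring). ring.
    - rewrite Hc, <- HS. ring. }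
  apply Cmult_reg in Hd; auto.
  rewrite <- (Cplus_0_l (RtoC (INR N * cot y))), <- Hd. ring.
Qed.


Definition derC (f : R -> C) (x : R) (l : C) := @is_derive R_AbsRing C_R_NormedModule f x l.

Lemma derC_pair (f g : R -> R) (x a b : R) : is_derive f x a -> is_derive g x b ->
  derC (fun y => (f y, g y)) x (a, b).
Proof.
  intros Hf Hg. unfold derC, is_derive.
  eapply filterdiff_ext_lin.
  - apply (filterdiff_comp'_2 (K := R_AbsRing) (W := C_R_NormedModule) f g (fun u v => (u, v)) x _ _ (fun u v => (u, v)) Hf Hg).
    apply filterdiff_linear. split.
    + intros u v. reflexivity.
    + intros k u. reflexivity.
    + exists 1. split. lra. intros [u1 u2]. rewrite Rmult_1_l. apply Rle_refl.
  - intros y. reflexivity.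
Qed.

Lemma derC_fst (F : R -> C) x l : derC F x l -> is_derive (fun y => fst (F y)) x (fst l).
Proof.
  intros H. unfold derC, is_derive in *.
  eapply filterdiff_ext_lin.
  - eapply (filterdiff_comp' F (fun u : C_R_NormedModule => fst u)). exact H.
    apply filterdiff_linear. apply (is_linear_fst (U := R_NormedModule) (V := R_NormedModule)).
  - intros y. reflexivity.
Qed.

Lemma derC_snd (F : R -> C) x l : derC F x l -> is_derive (fun y => snd (F y)) x (snd l).
Proof.
  intros H. unfold derC, is_derive in *.
  eapply filterdiff_ext_lin.
  - eapply (filterdiff_comp' F (fun u : C_R_NormedModule => snd u)). exact H.
    apply filterdiff_linear. apply (is_linear_snd (U := R_NormedModule) (V := R_NormedModule)).
  - intros y. reflexivity.
Qed.

Lemma derC_comp (F : R -> C) x l : is_derive (fun y => fst (F y)) x (fst l) -> is_derive (fun y => snd (F y)) x (snd l) -> derC F x l.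
Proof.
  intros H1 H2. destruct l as [l1 l2].
  pose proof (derC_pair _ _ x l1 l2 H1 H2) as H.
  unfold derC in *. eapply is_derive_ext; [|exact H]. intros y. simpl. destruct (F y); reflexivity.
Qed.

Lemma is_derive_eq (f : R -> R) x l l' : is_derive f x l -> l = l' -> is_derive f x l'.
Proof. intros H ->; exact H. Qed.

Lemma derC_eq (f : R -> C) x l l' : derC f x l -> l = l' -> derC f x l'.
Proof. intros H ->; exact H. Qed.

Lemma derC_ext (f g : R -> C) x l : (forall y, f y = g y) -> derC f x l -> derC g x l.
Proof. intros H H1. unfold derC in *. eapply is_derive_ext; eauto. Qed.

Lemma dR_plus (f g : R -> R) x a b : is_derive f x a -> is_derive g x b -> is_derive (fun y => f y + g y) x (a + b).
Proof. intros. exact (is_derive_plus f g x a b H H0). Qed.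
Lemma dR_minus (f g : R -> R) x a b : is_derive f x a -> is_derive g x b -> is_derive (fun y => f y - g y) x (a - b).
Proof. intros. exact (is_derive_minus f g x a b H H0). Qed.
Lemma dR_mult (f g : R -> R) x a b : is_derive f x a -> is_derive g x b -> is_derive (fun y => f y * g y) x (a * g x + f x * b).
Proof. intros. exact (is_derive_mult f g x a b H H0 Rmult_comm). Qed.

Lemma dR_const (c : R) x : is_derive (fun _ => c) x 0.
Proof. exact (is_derive_const c x). Qed.

Lemma dR_id x : is_derive (fun y : R => y) x 1.
Proof. exact (is_derive_id x). Qed.

Lemma derC_plus (F G : R -> C) x a b : derC F x a -> derC G x b -> derC (fun y => Cplus (F y) (G y)) x (Cplus a b).
Proof.
  intros HF HG. apply derC_comp; simpl.
  - apply dR_plus; apply derC_fst; auto.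
  - apply dR_plus; apply derC_snd; auto.
Qed.

Lemma derC_mult (F G : R -> C) x a b : derC F x a -> derC G x b ->
  derC (fun y => Cmult (F y) (G y)) x (Cplus (Cmult a (G x)) (Cmult (F x) b)).
Proof.
  intros HF HG. pose proof (derC_fst _ _ _ HF). pose proof (derC_snd _ _ _ HF).
  pose proof (derC_fst _ _ _ HG). pose proof (derC_snd _ _ _ HG).
  apply derC_comp; simpl.
  - eapply is_derive_eq. apply dR_minus; apply dR_mult; eauto. simpl. ring.
  - eapply is_derive_eq. apply dR_plus; apply dR_mult; eauto. simpl. ring.
Qed.

Lemma derC_const (c : C) x : derC (fun _ => c) x (RtoC 0).
Proof. apply derC_comp; simpl; apply dR_const. Qed.

Lemma derC_RtoC (f : R -> R) x a : is_derive f x a -> derC (fun y => RtoC (f y)) x (RtoC a).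
Proof. intros H. apply derC_comp; simpl; auto. apply dR_const. Qed.

Lemma derC_e (m : Z) x : derC (e_n m) x (Cmult (0, 2 * PI * IZR m) (e_n m x)).
Proof.
  apply derC_comp; unfold e_n; simpl.
  - auto_derive; auto. ring.
  - auto_derive; auto. ring.
Qed.

Lemma derC_scal (c : C) (F : R -> C) x a : derC F x a -> derC (fun y => Cmult c (F y)) x (Cmult c a).
Proof.
  intros H. eapply derC_eq. apply derC_mult; [apply derC_const | exact H]. apply Ceq; simpl; ring.
Qed.

Lemma derC_csum (n : nat) (F : nat -> R -> C) (dF : nat -> C) x :
  (forall k, (k < n)%nat -> derC (F k) x (dF k)) -> derC (fun y => csum n (fun k => F k y)) x (csum n dF).
Proof.
  induction n; intros H; simpl.
  - apply derC_const.
  - apply derC_plus. apply IHn; intros; apply H; lia. apply H; lia.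
Qed.

Lemma derC_cont (F : R -> C) x l : derC F x l -> @continuous R_UniformSpace C_UniformSpace F x.
Proof.
  intros H. apply (ex_derive_continuous (K := R_AbsRing) (V := C_R_NormedModule)). exists l. exact H.
Qed.


Definition F0 (t s : R) : C := RtoC (- (1 / (2 * PI)) * ln (sin (PI * (t - s)) ^ 2)).

Lemma F0_der (t s : R) : sin (PI * (t - s)) <> 0 -> derC (F0 t) s (RtoC (cot (PI * (t - s)))).
Proof.
  intros H. pose proof PI_RGT_0. apply derC_RtoC.
  assert (Hp : 0 < sin (PI * (t - s)) ^ 2) by (apply pow2_gt_0; auto).
  auto_derive.
  - replace (t + - s) with (t - s) by ring. simpl in Hp. lra.
  - replace (t + - s) with (t - s) by ring. unfold cot. field. split; lra.
Qed.

Definition Eint (m : Z) (s : R) : C :=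
  if Z.eq_dec m 0 then RtoC s else (sin (2 * PI * IZR m * s) / (2 * PI * IZR m), - cos (2 * PI * IZR m * s) / (2 * PI * IZR m)).

Lemma Eint_der (m : Z) (s : R) : derC (Eint m) s (e_n m s).
Proof.
  unfold Eint. destruct (Z.eq_dec m 0) as [->|Hm].
  - eapply derC_eq. apply derC_RtoC. apply is_derive_id. rewrite e_freq0. reflexivity.
  - pose proof PI_RGT_0. assert (IZR m <> 0) by (apply not_0_IZR; auto).
    apply derC_comp; unfold e_n; simpl.
    + auto_derive; auto. field. split; lra.
    + auto_derive; auto. field. split; lra.
Qed.

Lemma Eint_val (m : Z) : Cminus (Eint m 1) (Eint m 0) = if Z.eq_dec m 0 then RtoC 1 else RtoC 0.
Proof.
  unfold Eint. destruct (Z.eq_dec m 0).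
  - apply Ceq; simpl; ring.
  - replace (2 * PI * IZR m * 1) with (2 * PI * IZR m) by ring.
    replace (2 * PI * IZR m * 0) with 0 by ring.
    rewrite cos_2piZ, sin_2piZ, cos_0, sin_0. apply Ceq; simpl; field; apply not_0_IZR in n; pose proof PI_RGT_0; split; lra.
Qed.

Definition HA (t : R) (n : Z) (G : R -> C) : Prop :=
  forall s, sin (PI * (t - s)) <> 0 ->
    derC (fun y => Cplus (Cmult (e_n n t) (F0 t y)) (G y)) s (Cmult (RtoC (cot (PI * (t - s)))) (e_n n s)).
Definition HB (G : R -> C) : Prop := forall s, exists l, derC G s l.

Definition Gup (t : R) (n : Z) (G : R -> C) (y : R) : C :=
  Cminus (Cmult (e_n 1 t) (G y)) (Cmult Ci (Cplus (Cmult (e_n 1 t) (Eint n y)) (Eint (n + 1) y))).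
Definition Gdn (t : R) (n : Z) (G : R -> C) (y : R) : C :=
  Cmult (e_n (-1) t) (Cplus (G y) (Cmult Ci (Cplus (Cmult (e_n 1 t) (Eint (n - 1) y)) (Eint n y)))).

Lemma step_up t n G : HA t n G -> HB G -> HA t (n + 1) (Gup t n G) /\ HB (Gup t n G).
Proof.
  intros HAG HBG. split.
  - intros s Hs. unfold Gup.
    eapply derC_eq. apply (derC_ext (fun y => Cplus (Cmult (e_n 1 t) (Cplus (Cmult (e_n n t) (F0 t y)) (G y))) (Cmult (Copp Ci) (Cplus (Cmult (e_n 1 t) (Eint n y)) (Eint (n+1) y))))).
    2:{ eapply derC_plus. apply derC_scal. apply (HAG s Hs).
        apply derC_scal. apply derC_plus. apply derC_scal. apply Eint_der. apply Eint_der. }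
    + intros y. cbv beta. unfold Gup. rewrite (Z.add_comm n 1), e_freq_add. unfold Cminus. ring.
    + rewrite cot_step by auto. unfold Cminus. ring.
  - intros s. destruct (HBG s) as [l Hl]. eexists.
    apply (derC_ext (fun y => Cplus (Cmult (e_n 1 t) (G y)) (Cmult (Copp Ci) (Cplus (Cmult (e_n 1 t) (Eint n y)) (Eint (n+1) y))))).
    { intros y. unfold Gup, Cminus. ring. }
    eapply derC_plus. apply derC_scal. exact Hl.
    apply (derC_scal (Copp Ci)). apply derC_plus. apply derC_scal. apply Eint_der. apply Eint_der.
Qed.

Lemma step_dn t n G : HA t n G -> HB G -> HA t (n - 1) (Gdn t n G) /\ HB (Gdn t n G).
Proof.
  intros HAG HBG. split.
  - intros s Hs. unfold Gdn.
    eapply derC_eq. apply (derC_ext (fun y => Cmult (e_n (-1) t) (Cplus (Cplus (Cmult (e_n n t) (F0 t y)) (G y)) (Cmult Ci (Cplus (Cmult (e_n 1 t) (Eint (n - 1) y)) (Eint n y)))))).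
    2:{ apply derC_scal. eapply derC_plus. apply (HAG s Hs).
        apply derC_scal. apply derC_plus. apply derC_scal. apply Eint_der. apply Eint_der. }
    + intros y. cbv beta. unfold Gdn. replace n with (1 + (n - 1))%Z at 1 by lia. rewrite e_freq_add.
      pose proof (e_inv' 1 t) as Hi. change (- (1))%Z with (-1)%Z in Hi.
      transitivity (Cplus (Cmult (Cmult (e_n (-1) t) (e_n 1 t)) (Cmult (e_n (n - 1) t) (F0 t y)))
         (Cmult (e_n (-1) t) (Cplus (G y) (Cmult Ci (Cplus (Cmult (e_n 1 t) (Eint (n - 1) y)) (Eint n y)))))).
      * ring.
      * rewrite Hi. ring.
    + pose proof (cot_step (n - 1) t s Hs) as Hc. replace (n - 1 + 1)%Z with n in Hc by lia.
      rewrite Hc.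
      pose proof (e_inv' 1 t) as Hi. change (- (1))%Z with (-1)%Z in Hi.
      transitivity (Cmult (Cmult (e_n (-1) t) (e_n 1 t)) (Cmult (RtoC (cot (PI * (t - s)))) (e_n (n - 1) s))).
      * unfold Cminus. ring.
      * rewrite Hi. ring.
  - intros s. destruct (HBG s) as [l Hl]. eexists. unfold Gdn.
    apply (derC_scal (e_n (-1) t) (fun y => Cplus (G y) (Cmult Ci (Cplus (Cmult (e_n 1 t) (Eint (n - 1) y)) (Eint n y))))). eapply derC_plus. exact Hl.
    apply derC_scal. apply derC_plus. apply derC_scal. apply Eint_der. apply Eint_der.
Qed.

Definition hval (t : R) (n : Z) (G : R -> C) : Prop :=
  Cminus (G 1) (G 0) = Cmult (Cmult (Copp Ci) (RtoC (IZR (Z.sgn n)))) (e_n n t).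

Lemma Eint_val' (m : Z) : Cminus (Eint m 1) (Eint m 0) = RtoC (if Z.eq_dec m 0 then 1 else 0).
Proof. rewrite Eint_val. destruct (Z.eq_dec m 0); reflexivity. Qed.

Lemma hil_base t : HA t 0 (fun _ => RtoC 0) /\ HB (fun _ => RtoC 0) /\ hval t 0 (fun _ => RtoC 0).
Proof.
  split; [|split].
  - intros s Hs. eapply derC_eq. apply derC_plus. apply derC_scal. apply F0_der; auto. apply derC_const.
    rewrite !e_freq0. apply Ceq; simpl; ring.
  - intros s. eexists. apply derC_const.
  - unfold hval. simpl. apply Ceq; simpl; ring.
Qed.

Lemma hil_pos t (m : nat) : exists G, HA t (Z.of_nat m) G /\ HB G /\ hval t (Z.of_nat m) G.
Proof.
  induction m.
  - exists (fun _ => RtoC 0). apply hil_base.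
  - destruct IHm as [G [HA1 [HB1 HV1]]].
    exists (Gup t (Z.of_nat m) G).
    replace (Z.of_nat (S m)) with (Z.of_nat m + 1)%Z by lia.
    destruct (step_up t _ G HA1 HB1) as [HA2 HB2]. split; [|split]; auto.
    unfold hval in *.
    transitivity (Cminus (Cmult (e_n 1 t) (Cminus (G 1) (G 0))) (Cmult Ci (Cplus (Cmult (e_n 1 t) (Cminus (Eint (Z.of_nat m) 1) (Eint (Z.of_nat m) 0))) (Cminus (Eint (Z.of_nat m + 1) 1) (Eint (Z.of_nat m + 1) 0))))).
    { unfold Gup. ring. }
    rewrite HV1, !Eint_val'.
    destruct (Z.eq_dec (Z.of_nat m + 1) 0) as [e|_]; [lia|].
    replace (Z.sgn (Z.of_nat m + 1)) with 1%Z by lia.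
    rewrite (Z.add_comm _ 1), e_freq_add.
    destruct (Z.eq_dec (Z.of_nat m) 0) as [e|ne].
    + rewrite e. rewrite e_freq0. simpl. apply Ceq; simpl; ring.
    + replace (Z.sgn (Z.of_nat m)) with 1%Z by lia. apply Ceq; simpl; ring.
Qed.

Lemma hil_neg t (m : nat) : exists G, HA t (- Z.of_nat m) G /\ HB G /\ hval t (- Z.of_nat m) G.
Proof.
  induction m.
  - exists (fun _ => RtoC 0). apply hil_base.
  - destruct IHm as [G [HA1 [HB1 HV1]]].
    exists (Gdn t (- Z.of_nat m) G).
    replace (- Z.of_nat (S m))%Z with (- Z.of_nat m - 1)%Z by lia.
    destruct (step_dn t _ G HA1 HB1) as [HA2 HB2]. split; [|split]; auto.
    unfold hval in *.
    transitivity (Cmult (e_n (-1) t) (Cplus (Cminus (G 1) (G 0)) (Cmult Ci (Cplus (Cmult (e_n 1 t) (Cminus (Eint (- Z.of_nat m - 1) 1) (Eint (- Z.of_nat m - 1) 0))) (Cminus (Eint (- Z.of_nat m) 1) (Eint (- Z.of_nat m) 0)))))).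
    { unfold Gdn. ring. }
    rewrite HV1, !Eint_val'.
    destruct (Z.eq_dec (- Z.of_nat m - 1) 0) as [e|_]; [lia|].
    replace (Z.sgn (- Z.of_nat m - 1)) with (-1)%Z by lia.
    replace (- Z.of_nat m - 1)%Z with (-1 + - Z.of_nat m)%Z by lia.
    rewrite e_freq_add.
    destruct (Z.eq_dec (- Z.of_nat m) 0) as [e|ne].
    + rewrite e. rewrite e_freq0. simpl. apply Ceq; simpl; ring.
    + replace (Z.sgn (- Z.of_nat m)) with (-1)%Z by lia. apply Ceq; simpl; ring.
Qed.

Lemma hil_freq t (n : Z) : exists G, HA t n G /\ HB G /\ hval t n G.
Proof.
  destruct (Z_le_gt_dec 0 n).
  - replace n with (Z.of_nat (Z.to_nat n)) by lia. apply hil_pos.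
  - replace n with (- Z.of_nat (Z.to_nat (- n)))%Z by lia. apply hil_neg.
Qed.


Definition phiM (M : nat) (a : nat -> C) (f : nat -> Z) (y : R) : C :=
  csum M (fun k => Cmult (a k) (e_n (f k) y)).

Lemma comb t (a : nat -> C) (f : nat -> Z) (M : nat) : exists Gm : R -> C,
  (forall s, sin (PI * (t - s)) <> 0 ->
    derC (fun y => Cplus (Cmult (phiM M a f t) (F0 t y)) (Gm y)) s (Cmult (RtoC (cot (PI * (t - s)))) (phiM M a f s))) /\
  HB Gm /\
  Cminus (Gm 1) (Gm 0) = csum M (fun k => Cmult (a k) (Cmult (Cmult (Copp Ci) (RtoC (IZR (Z.sgn (f k))))) (e_n (f k) t))).
Proof.
  induction M.
  - exists (fun _ => RtoC 0). split; [|split].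
    + intros s Hs. eapply derC_eq. apply derC_plus. apply derC_scal. apply F0_der; auto. apply derC_const.
      unfold phiM; simpl. apply Ceq; simpl; ring.
    + intros s. eexists. apply derC_const.
    + simpl. apply Ceq; simpl; ring.
  - destruct IHM as [Gm [H1 [H2 H3]]].
    destruct (hil_freq t (f M)) as [G [HA1 [HB1 HV1]]].
    exists (fun y => Cplus (Gm y) (Cmult (a M) (G y))). split; [|split].
    + intros s Hs. eapply derC_eq.
      apply (derC_ext (fun y => Cplus (Cplus (Cmult (phiM M a f t) (F0 t y)) (Gm y)) (Cmult (a M) (Cplus (Cmult (e_n (f M) t) (F0 t y)) (G y))))).
      { intros y. unfold phiM. cbn [csum]. ring. }
      apply derC_plus. apply H1; auto. apply derC_scal. apply HA1; auto.
      unfold phiM. cbn [csum]. ring.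
    + intros s. destruct (H2 s) as [l1 Hl1]. destruct (HB1 s) as [l2 Hl2].
      eexists. apply derC_plus. exact Hl1. apply derC_scal. exact Hl2.
    + cbn [csum]. rewrite <- H3. unfold hval in HV1. rewrite <- HV1. ring.
Qed.


Lemma at_right_le (x : R) : filter_le (at_right x) (locally x).
Proof. intros P [d Hd]. exists d. intros y Hy _. apply Hd. exact Hy. Qed.

Lemma sin_strip (k0 : Z) (u : R) : IZR k0 < u < IZR k0 + 1 -> sin (PI * u) <> 0.
Proof.
  intros Hu. apply sin_nonint. intros z ->. destruct Hu as [Hu1 Hu2].
  apply lt_IZR in Hu1. rewrite <- plus_IZR in Hu2. apply lt_IZR in Hu2. lia.
Qed.

Lemma sin_sq_shift (x : R) (k : Z) : sin (x + IZR k * PI) ^ 2 = sin x ^ 2.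
Proof.
  assert (Hk : sin (IZR k * PI) = 0) by (apply sin_eq_0_1; exists k; reflexivity).
  rewrite sin_plus, Hk.
  pose proof (sin2_cos2 (IZR k * PI)) as H. unfold Rsqr in H. rewrite Hk in H.
  replace ((sin x * cos (IZR k * PI) + cos x * 0) ^ 2) with (sin x ^ 2 * (cos (IZR k * PI) * cos (IZR k * PI))) by ring.
  replace (cos (IZR k * PI) * cos (IZR k * PI)) with 1 by lra. ring.
Qed.

Lemma integrand_der t a f M s : sin (PI * (t - s)) <> 0 ->
  exists l, derC (fun y => Cmult (RtoC (cot (PI * (t - y)))) (phiM M a f y)) s l.
Proof.
  intros Hs.
  assert (He : ex_derive (fun y => cot (PI * (t - y))) s) by (unfold cot; auto_derive; auto).
  destruct He as [l1 Hl1].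
  eexists. apply derC_mult. apply derC_RtoC. exact Hl1.
  unfold phiM. apply derC_csum. intros k _. apply derC_scal. apply derC_e.
Qed.

Lemma integral_piece t a f M (Gm : R -> C)
  (H1 : forall s, sin (PI * (t - s)) <> 0 ->
    derC (fun y => Cplus (Cmult (phiM M a f t) (F0 t y)) (Gm y)) s (Cmult (RtoC (cot (PI * (t - s)))) (phiM M a f s)))
  (lo hi : R) : lo <= hi -> (forall x, lo <= x <= hi -> sin (PI * (t - x)) <> 0) ->
  RIntC (fun y => Cmult (RtoC (cot (PI * (t - y)))) (phiM M a f y)) lo hi =
  Cminus (Cplus (Cmult (phiM M a f t) (F0 t hi)) (Gm hi)) (Cplus (Cmult (phiM M a f t) (F0 t lo)) (Gm lo)).
Proof.
  intros Hlh Hs. unfold RIntC.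
  match goal with |- RInt ?g _ _ = ?v => assert (Hi : @is_RInt C_R_NormedModule g lo hi v) end.
  2:{ apply (is_RInt_unique (V := C_R_CompleteNormedModule)) in Hi. exact Hi. }
  apply (is_RInt_derive (V := C_R_CompleteNormedModule) (fun y => Cplus (Cmult (phiM M a f t) (F0 t y)) (Gm y))).
  - intros x Hx. rewrite Rmin_left, Rmax_right in Hx by auto. apply H1. apply Hs. auto.
  - intros x Hx. rewrite Rmin_left, Rmax_right in Hx by auto.
    destruct (integrand_der t a f M x (Hs x Hx)) as [l Hl]. exact (derC_cont _ _ _ Hl).
Qed.

Lemma derC_chain (G : R -> C) (g : R -> R) x l dg : derC G (g x) l -> is_derive g x dg ->
  derC (fun y => G (g y)) x (scal dg l).
Proof. intros H1 H2. exact (is_derive_comp (V := C_R_NormedModule) G g x l dg H1 H2). Qed.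


Lemma Sd_gen (N : nat) (t : R) (n : Z) : (0 < N)%nat -> (forall z : Z, t / (1 / INR N) <> IZR z) ->
  (Z.abs n < Z.of_nat N)%Z ->
  Sd N t n = Cmult (e_n n t) (Cminus (Sd N t 0) (Cmult (Cmult Ci (RtoC (INR N))) (RtoC (IZR (Z.sgn n))))).
Proof.
  intros HN Ht Hn. destruct (Z_le_gt_dec 0 n).
  - replace n with (Z.of_nat (Z.to_nat n)) by lia. apply Sd_pos; auto. lia.
  - replace n with (- Z.of_nat (Z.to_nat (- n)))%Z by lia. apply Sd_neg; auto. lia.
Qed.

Lemma disc (N : nat) (t : R) (a : nat -> C) (f : nat -> Z) : (0 < N)%nat -> (forall z : Z, t / (1 / INR N) <> IZR z) ->
  (forall k, (k < N)%nat -> (Z.abs (f k) < Z.of_nat N)%Z) ->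
  Cminus (Cmult (RtoC (1 / INR N))
       (csum N (fun k => Cmult (RtoC (cot (PI * (t - INR (S k) * (1 / INR N))))) (phiM N a f (INR (S k) * (1 / INR N))))))
     (Cmult (RtoC (cot (PI * t / (1 / INR N)))) (phiM N a f t))
  = csum N (fun k => Cmult (a k) (Cmult (Cmult (Copp Ci) (RtoC (IZR (Z.sgn (f k))))) (e_n (f k) t))).
Proof.
  intros HN Ht Hf. pose proof (INR_pos N HN) as HNp.
  assert (E1 : csum N (fun k => Cmult (RtoC (cot (PI * (t - INR (S k) * (1 / INR N))))) (phiM N a f (INR (S k) * (1 / INR N))))
             = csum N (fun l => Cmult (a l) (Sd N t (f l)))).
  { unfold phiM, Sd.
    rewrite (csum_ext N _ (fun j => csum N (fun l => Cmult (a l) (Cmult (RtoC (cot (PI * (t - INR (S j) * (1 / INR N))))) (e_n (f l) (INR (S j) * (1 / INR N))))))).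
    - rewrite csum_swap. apply csum_ext. intros l _. apply csum_scal.
    - intros j _. rewrite <- csum_scal. apply csum_ext. intros l _. ring. }
  rewrite E1.
  rewrite (csum_ext N (fun l => Cmult (a l) (Sd N t (f l)))
     (fun l => Cmult (a l) (Cmult (e_n (f l) t) (Cminus (Sd N t 0) (Cmult (Cmult Ci (RtoC (INR N))) (RtoC (IZR (Z.sgn (f l))))))))).
  2:{ intros l Hl. rewrite Sd_gen; auto. }
  rewrite Sd_0 by auto.
  replace (PI * t / (1 / INR N)) with (PI * (INR N * t)) by (field; lra).
  unfold phiM. rewrite <- !csum_scal. rewrite <- csum_minus. apply csum_ext. intros k _.
  set (ct := cot (PI * (INR N * t))).
  assert (Hh : Cmult (RtoC (1 / INR N)) (RtoC (INR N)) = RtoC 1) by (apply Ceq; simpl; field; lra).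
  replace (RtoC (INR N * ct)) with (Cmult (RtoC (INR N)) (RtoC ct)) by (apply Ceq; simpl; ring).
  transitivity (Cminus (Cmult (Cmult (RtoC (1 / INR N)) (RtoC (INR N))) (Cmult (a k) (Cmult (e_n (f k) t) (Cminus (RtoC ct) (Cmult Ci (RtoC (IZR (Z.sgn (f k)))))))))
     (Cmult (RtoC ct) (Cmult (a k) (e_n (f k) t)))).
  - ring.
  - rewrite Hh. ring.
Qed.


Theorem proposition5p1 (N : nat) (HN : (0 < N)%nat) (phi : R -> C)
  (Hphi : in_Th N phi) (t : R)
  (Ht : forall z : Z, t / (1 / INR N) <> IZR z) :
  let h := 1 / INR N in
  is_periodic_Hilbert phi t
    (Cminus
       (Cmult (RtoC h)
          (csum N (fun k => let j := S k in
             Cmult (RtoC (cot (PI * (t - INR j * h)))) (phi (INR j * h)))))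
       (Cmult (RtoC (cot (PI * t / h))) (phi t))).
Proof.
  cbv zeta. destruct Hphi as [c Hc].
  set (a := fun k => c (freq N k)). set (f := freq N).
  assert (Hp : phi = phiM N a f) by (apply functional_extensionality; intros y; rewrite Hc; reflexivity).
  rewrite Hp. clear Hc Hp.
  pose proof (INR_pos N HN) as HNp.
  rewrite (disc N t a f HN Ht).
  2:{ intros k Hk. unfold f, freq. assert (0 <= Z.of_nat N / 2)%Z by (apply Z.div_pos; lia). assert (Z.of_nat N / 2 < Z.of_nat N)%Z by (apply Z.div_lt; lia). lia. }
  destruct (comb t a f N) as [Gm [H1 [H2 H3]]].
  rewrite <- H3.
  assert (Hti : forall z : Z, t <> IZR z).
  { intros z Hz. apply (Ht (z * Z.of_nat N)%Z). rewrite mult_IZR, <- INR_IZR_INZ, Hz. field. lra. }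
  set (k0 := Int_part t). set (c0 := frac_part t).
  assert (Htc : t = IZR k0 + c0) by apply Rplus_Int_part_frac_part.
  assert (Hc0 : 0 < c0 < 1).
  { destruct (base_fp t) as [B1 B2]. fold c0 in B1, B2. split; [|lra].
    destruct (Rle_lt_or_eq_dec 0 c0) as [?|E]; [lra|auto|]. exfalso. apply (Hti k0). lra. }
  unfold is_periodic_Hilbert, is_pv_integral. fold c0.
  set (psi := fun e => Cplus (Cminus (Gm (c0 - e)) (Gm 0)) (Cminus (Gm 1) (Gm (c0 + e)))).
  apply (filterlim_ext_loc psi).
  - assert (Hd : 0 < Rmin c0 (1 - c0)) by (apply Rmin_pos; lra).
    exists (mkposreal _ Hd). intros e He Hpos. simpl in He.
    unfold ball in He; simpl in He; unfold AbsRing_ball, abs, minus, plus, opp in He; simpl in He.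
    rewrite Ropp_0, Rplus_0_r in He. apply Rabs_def2 in He. destruct He as [He _].
    pose proof (Rmin_l c0 (1 - c0)). pose proof (Rmin_r c0 (1 - c0)).
    rewrite (integral_piece t a f N Gm H1 0 (c0 - e)).
    3:{ intros x Hx. apply (sin_strip k0). lra. }
    2:{ lra. }
    rewrite (integral_piece t a f N Gm H1 (c0 + e) 1).
    3:{ intros x Hx. apply (sin_strip (k0 - 1)). rewrite minus_IZR. lra. }
    2:{ lra. }
    assert (E1 : F0 t (c0 - e) = F0 t (c0 + e)).
    { unfold F0. f_equal. f_equal. f_equal.
      replace (PI * (t - (c0 - e))) with (PI * e + IZR k0 * PI) by (rewrite Htc; ring).
      replace (PI * (t - (c0 + e))) with (- (PI * e) + IZR k0 * PI) by (rewrite Htc; ring).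
      rewrite !sin_sq_shift, sin_neg. ring. }
    assert (E2 : F0 t 0 = F0 t 1).
    { unfold F0. f_equal. f_equal. f_equal.
      replace (PI * (t - 1)) with (PI * (t - 0) + IZR (-1) * PI) by (simpl; ring).
      rewrite sin_sq_shift. reflexivity. }
    rewrite E1, E2. unfold psi. ring.
  - apply (filterlim_filter_le_1 (F := locally 0)). apply at_right_le.
    assert (Hpsi0 : psi 0 = Cminus (Gm 1) (Gm 0)).
    { unfold psi. rewrite Rminus_0_r, Rplus_0_r. ring. }
    rewrite <- Hpsi0.
    destruct (H2 (c0 - 0)) as [l1 Hl1]. destruct (H2 (c0 + 0)) as [l2 Hl2].
    assert (Hder : exists l, derC psi 0 l).
    { eexists. unfold psi.
      apply (derC_ext (fun e => Cplus (Cplus (Gm (c0 - e)) (Cmult (RtoC (-1)) (Gm 0))) (Cplus (Gm 1) (Cmult (RtoC (-1)) (Gm (c0 + e)))))).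
      { intros y. apply Ceq; simpl; ring. }
      apply derC_plus; apply derC_plus.
      - apply (derC_chain Gm (fun e => c0 - e) 0 l1 (0 - 1)); auto. apply dR_minus. apply dR_const. apply dR_id.
      - apply derC_scal. apply derC_const.
      - apply derC_const.
      - apply derC_scal. apply (derC_chain Gm (fun e => c0 + e) 0 l2 (0 + 1)); auto. apply dR_plus. apply dR_const. apply dR_id. }
    destruct Hder as [l Hl]. exact (derC_cont _ _ _ Hl).
Qed.
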